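(* Let $n\geq 2$, $R>0$, $m$ a uniform (rotation-invariant) measure on $S^{n-1}_R$, $f:S^{n-1}_R\to[0,1]$ integrable, and $K:\mathbb{R}\to\mathbb{R}$ non-decreasing, bounded and measurable. Let $\sigma$ be a hyperplane through the origin not containing $r=(R,0,\ldots,0)$. Then for every $x \in S^{n-1}_R$, \[ \left|Kf^\sigma(x) - Kf^\sigma(\sigma x)\right| \geq \left|Kf(x) - Kf(\sigma x)\right|, \] where $Kg(x) = \int_{S^{n-1}_R} K(\langle x,y\rangle) g(y)\,dm(y)$.
   Context: $S^{n-1}_R = \{x\in\mathbb{R}^n:\|x\|=R\}$. Let $v$ be the unit normal of $\sigma$ with $\langle v,r\rangle>0$; $H^+_\sigma = \{x\in S^{n-1}_R : \langle x,v\rangle\geq 0\}$, $H^-_\sigma = \{x\in S^{n-1}_R:\langle x,v\rangle<0\}$; $\sigma x$ is the reflection of $x$ across $\sigma$. The polarization is $f^\sigma(x) = \max\{f(x),f(\sigma x)\}$ for $x\in H^+_\sigma$ and $f^\sigma(x)=\min\{f(x),f(\sigma x)\}$ for $x\in H^-_\sigma$. *)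

(* Defs.v *)
From HB Require Import structures.
From mathcomp Require Import all_boot all_order all_algebra.
From mathcomp Require Import all_classical all_reals all_analysis.
Set Implicit Arguments. Unset Strict Implicit. Unset Printing Implicit Defensive.
Import Order.TTheory GRing.Theory Num.Theory.
Import numFieldNormedType.Exports.
Local Open Scope classical_set_scope.
Local Open Scope ring_scope.

(* Conventions: R^n is modelled as row vectors 'rV[R]_n, equipped with the
   Borel sigma-algebra (generated by the open sets of the product topology). *)
Definition euclid (R : realType) (n : nat) : Type :=
  g_sigma_algebraType (@open 'rV[R]_n).

Definition dotp (R : realType) (n : nat) (x y : 'rV[R]_n) : R :=
  \sum_(i < n) x 0 i * y 0 i.

Definition sphere (R : realType) (n : nat) (rho : R) : set (euclid R n) :=
  [set x : 'rV[R]_n | Num.sqrt (dotp x x) = rho].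

Definition is_orthogonal_mx (R : realType) (n : nat) (Q : 'M[R]_n) : Prop :=
  Q *m Q^T = 1%:M.

Definition rpoint (R : realType) (n : nat) (rho : R) : 'rV[R]_n :=
  \row_(i < n) (if val i == 0%N then rho else 0).

(* reflection across the hyperplane sigma = v^perp, for a unit normal v *)
Definition refl (R : realType) (n : nat) (v x : 'rV[R]_n) : 'rV[R]_n :=
  x - (2 * dotp x v) *: v.

Definition polarize (R : realType) (n : nat) (v : 'rV[R]_n)
    (f : 'rV[R]_n -> R) (x : 'rV[R]_n) : R :=
  if 0 <= dotp x v then Num.max (f x) (f (refl v x))
  else Num.min (f x) (f (refl v x)).

Definition Kop (R : realType) (n : nat) (rho : R)
    (m : {measure set (euclid R n) -> \bar R}) (K : R -> R)
    (g : euclid R n -> R) (x : 'rV[R]_n) : R :=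
  Rintegral m (@sphere R n rho) (fun y => K (dotp x y) * g y).

(* Main.v *)
Require Import Defs.
From HB Require Import structures.
From mathcomp Require Import all_boot all_order all_algebra.
From mathcomp Require Import all_classical all_reals all_analysis.
From mathcomp Require Import ring lra.
Import Order.TTheory GRing.Theory Num.Theory.
Import numFieldNormedType.Exports.
Local Open Scope classical_set_scope.
Local Open Scope ring_scope.
Section Alg.
Variables (R : realType) (n : nat).
Implicit Types x y v w : 'rV[R]_n.

Lemma dotpC x y : dotp x y = dotp y x.
Proof. by rewrite /dotp; apply: eq_bigr => i _; rewrite mulrC. Qed.

Lemma dotpBZl x y v c : dotp (x - c *: v) y = dotp x y - c * dotp v y.
Proof.
rewrite /dotp mulr_sumr -sumrB; apply: eq_bigr => i _.
by rewrite !mxE mulrBl mulrA.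
Qed.

Lemma dotp_refl_l v x y : dotp (refl v x) y = dotp x y - 2 * dotp x v * dotp v y.
Proof. by rewrite /refl dotpBZl. Qed.

Lemma dotp_reflC v x y : dotp (refl v x) y = dotp x (refl v y).
Proof.
rewrite dotp_refl_l (dotpC x (refl v y)) dotp_refl_l (dotpC y x) (dotpC v x) (dotpC y v).
by rewrite (dotpC v y); congr (_ - _); rewrite -mulrA (mulrC (dotp x v)) mulrA.
Qed.

Lemma dotp_refl_v v y : dotp v v = 1 -> dotp (refl v y) v = - dotp y v.
Proof. by move=> vv; rewrite dotp_refl_l vv mulr1; lra. Qed.

Lemma reflK v y : dotp v v = 1 -> refl v (refl v y) = y.
Proof.
move=> vv; rewrite {1}/refl dotp_refl_v // /refl.
by rewrite mulrN scaleNr opprK subrK.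
Qed.

Lemma refl0 v y : dotp y v = 0 -> refl v y = y.
Proof. by move=> h; rewrite /refl h mulr0 scale0r subr0. Qed.

Lemma dotp_refl_refl v y : dotp v v = 1 -> dotp (refl v y) (refl v y) = dotp y y.
Proof. by move=> vv; rewrite dotp_reflC reflK. Qed.

Definition reflmx v : 'M[R]_n := 1%:M - 2 *: (v^T *m v).

Lemma mulmx_rV v x : x *m v^T = (dotp x v)%:M.
Proof.
rewrite [LHS]mx11_scalar; congr (_%:M).
by rewrite !mxE /dotp; apply: eq_bigr => i _; rewrite mxE.
Qed.

Lemma reflmxE v x : x *m reflmx v = refl v x.
Proof.
rewrite /reflmx mulmxBr mulmx1 -scalemxAr mulmxA mulmx_rV mul_scalar_mx.
by rewrite /refl scalerA.
Qed.

Lemma reflmx_tr v : (reflmx v)^T = reflmx v.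
Proof.
apply/matrixP => i j; rewrite !mxE !big_ord1 !mxE eq_sym.
by rewrite (mulrC (v 0 j)).
Qed.

Lemma reflmx_orth v : dotp v v = 1 -> is_orthogonal_mx (reflmx v).
Proof.
move=> vv; rewrite /is_orthogonal_mx reflmx_tr {1}/reflmx.
rewrite mulmxBl mul1mx -scalemxAl -mulmxA.
have -> : v *m reflmx v = v - 2 *: v.
  by rewrite reflmxE /refl vv mulr1.
rewrite /reflmx mulmxBr -scalemxAr; set A := v^T *m v.
apply/matrixP => i j; rewrite !mxE.
lra.
Qed.
End Alg.
Section Meas.
Variables (R : realType) (n : nat).
Local Notation E := (euclid R n).

Lemma cont_sum (s : seq 'I_n) (F : 'I_n -> 'rV[R]_n -> R) :
  (forall i, continuous (F i)) -> continuous (fun y => \sum_(i <- s) F i y).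
Proof.
move=> cF; elim: s => [|i s IH].
  have -> : (fun y => \sum_(i <- [::]) F i y) = fun=> 0; last exact: cst_continuous.
  by apply/funext => z; rewrite big_nil.
have -> : (fun y => \sum_(j <- i :: s) F j y) = (F i) + (fun y => \sum_(j <- s) F j y).
  by apply/funext => z; rewrite big_cons.
by move=> y; exact: (continuousD (cF i y) (IH y)).
Qed.

Lemma cont_dotp (w : 'rV[R]_n) : continuous (fun y : 'rV[R]_n => dotp w y).
Proof.
apply: cont_sum => i y.
apply: (@continuousM _ _ (fun=> w 0 i) (fun y : 'rV[R]_n => y 0 i)).
  exact: cst_continuous.
exact: coord_continuous.
Qed.

Lemma cont_dotpr (w : 'rV[R]_n) : continuous (fun y : 'rV[R]_n => dotp y w).
Proof.
have -> : (fun y => dotp y w) = fun y => dotp w y; last exact: cont_dotp.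
by apply/funext => z; rewrite dotpC.
Qed.

Lemma cont_refl (v : 'rV[R]_n) : continuous (refl v).
Proof.
move=> y; rewrite /refl.
apply: (@continuousB _ _ _ id (fun z => (2 * dotp z v) *: v)).
  exact: id.
apply: continuousZr_tmp.
apply: (@continuousM _ _ (fun=> 2) (fun z => dotp z v)).
  exact: cst_continuous.
exact: cont_dotpr.
Qed.

Lemma cont_norm : continuous (fun y : 'rV[R]_n => Num.sqrt (dotp y y)).
Proof.
move=> y; apply: (@continuous_comp _ _ _ (fun y : 'rV[R]_n => dotp y y) Num.sqrt).
  apply: cont_sum => i z.
  apply: (@continuousM _ _ (fun y : 'rV[R]_n => y 0 i) (fun y : 'rV[R]_n => y 0 i));
  exact: coord_continuous.
exact: sqrt_continuous.
Qed.

Lemma meas_cont (phi : 'rV[R]_n -> R) (D : set E) :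
  measurable D -> continuous phi -> measurable_fun D (phi : E -> R).
Proof.
move=> mD /continuousP cphi.
apply: (measurability _ (measurable_realfun.RGenOpens.measurableE R)).
move=> _ [_ [a [b ->]] <-]; apply: measurableI => //.
apply: sub_sigma_algebra; apply: cphi.
exact: interval_open.
Qed.

Lemma meas_refl (v : 'rV[R]_n) : measurable_fun setT (refl v : E -> E).
Proof.
apply: (@measurability _ _ E E setT (refl v) (@open 'rV[R]_n)) => //.
move=> _ [A oA <-]; rewrite setTI; apply: sub_sigma_algebra.
by move/continuousP: (cont_refl v); apply.
Qed.

Lemma meas_sphere (rho : R) : measurable (@sphere R n rho).
Proof.
have := meas_cont _ _ measurableT cont_norm measurableT _ (measurable_set1 rho).
by rewrite setTI.
Qed.
End Meas.
Section Main.
Variables (R : realType) (n : nat) (rho : R).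
Local Notation E := (euclid R n).
Variables (m : {measure set E -> \bar R}) (v : 'rV[R]_n).
Hypothesis mfin : (m setT < +oo)%E.
Hypothesis minv : forall Q : 'M[R]_n, is_orthogonal_mx Q ->
     forall A : set E, measurable A ->
       m ((fun x : E => (mulmx (x : 'rV[R]_n) Q : E)) @^-1` A) = m A.
Hypothesis vv : dotp v v = 1.
Local Notation S := (@sphere R n rho).

Lemma reflS (y : E) : S y -> S (refl v y).
Proof. by rewrite /sphere /= dotp_refl_refl. Qed.

Lemma preimage_reflS : refl v @^-1` S = S.
Proof.
apply/seteqP; split => y /=; first by move/reflS; rewrite reflK.
exact: reflS.
Qed.

Definition bnd (G : E -> R) := exists B, forall y, S y -> `|G y| <= B.

Lemma integ (G : E -> R) : measurable_fun S G -> bnd G -> m.-integrable S (EFin \o G).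
Proof.
move=> mG [B hB]; apply: measurable_bounded_integrable => //.
- exact: meas_sphere.
- apply: le_lt_trans mfin; apply: le_measure => //; rewrite inE //.
  exact: meas_sphere.
- exists B; split; first exact: num_real.
  move=> M BM y Sy /=; apply: le_trans (hB y Sy) _; exact: ltW.
Qed.

Lemma meas_comp (G : E -> R) : measurable_fun S G -> measurable_fun S (G \o refl v).
Proof.
move=> mG.
have mGT := (measurable_restrictT G (meas_sphere R n rho)).1 mG.
apply: (@eq_measurable_fun _ _ E R S ((G \_ S) \o refl v) (G \o refl v)).
  move=> y; rewrite inE => Sy /=; rewrite /patch mem_set //; exact: reflS.
exact: (measurableT_comp mGT (@measurable_funTS _ _ E E S (refl v) (meas_refl R n v))).
Qed.

Lemma bnd_comp (G : E -> R) : bnd G -> bnd (G \o refl v).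
Proof. by move=> [B hB]; exists B => y Sy; apply: hB; apply: reflS. Qed.

Lemma CV (G : E -> R) : measurable_fun S G -> bnd G ->
  Rintegral m S (G \o refl v) = Rintegral m S G.
Proof.
move=> mG bG.
have mS := meas_sphere R n rho.
have mGT := (measurable_restrictT G mS).1 mG.
have e1 : Rintegral m S G = Rintegral m S (G \_ S).
  by apply: eq_Rintegral => y; rewrite inE => Sy; rewrite /patch mem_set.
have e2 : Rintegral m S (G \o refl v) = Rintegral m S ((G \_ S) \o refl v).
  apply: eq_Rintegral => y; rewrite inE => Sy; rewrite /= /patch mem_set //.
  exact: reflS.
rewrite e1 e2 /Rintegral; congr fine.
have mEG := (measurable_realfun.measurable_EFinP setT (G \_ S)).2 mGT.
have intf : m.-integrable (refl v @^-1` S) ((EFin \o (G \_ S)) \o refl v).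
  rewrite preimage_reflS.
  apply: (integ (fun y => (G \_ S) (refl v y))).
    exact: (measurableT_comp mGT (@measurable_funTS _ _ E E S (refl v) (meas_refl R n v))).
  case: bG => B hB; exists B => y Sy; rewrite /patch mem_set; last exact: reflS.
  by apply: hB; apply: reflS.
have := @integral_pushforward _ _ E E R (refl v) (meas_refl R n v) m S _ mEG intf mS.
rewrite preimage_reflS => <-.
apply: eq_measure_integral => [|? A mA _]; first exact: meas_refl.
rewrite /= /pushforward -(minv _ (@reflmx_orth R n v vv) A mA).
by congr (m _); apply/funext => y; rewrite /= reflmxE.
Qed.

Definition good (G : E -> R) := measurable_fun S G /\ bnd G.

Lemma good_integ G : good G -> m.-integrable S (EFin \o G).
Proof. by case=> *; apply: integ. Qed.

Lemma good_comp G : good G -> good (G \o refl v).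
Proof. by case=> mG bG; split; [apply: meas_comp|apply: bnd_comp]. Qed.

Lemma good_ext G1 G2 : (forall y, S y -> G1 y = G2 y) -> good G1 -> good G2.
Proof.
move=> e [mG [B hB]]; split.
  by apply: (@eq_measurable_fun _ _ E R S G1 G2) => // y; rewrite inE => /e.
by exists B => y Sy; rewrite -e //; apply: hB.
Qed.

Lemma good_B G1 G2 : good G1 -> good G2 -> good (fun y => G1 y - G2 y).
Proof.
move=> [m1 [B1 h1]] [m2 [B2 h2]]; split.
  exact: measurable_realfun.measurable_funB.
exists (B1 + B2) => y Sy; apply: le_trans (ler_normB _ _) _.
by apply: lerD; [apply: h1|apply: h2].
Qed.

Lemma good_M G1 G2 : good G1 -> good G2 -> good (fun y => G1 y * G2 y).
Proof.
move=> [m1 [B1 h1]] [m2 [B2 h2]]; split.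
  exact: measurable_realfun.measurable_funM.
exists (`|B1| * `|B2|) => y Sy; rewrite normrM.
apply: ler_pM => //; apply: le_trans (ler_norm _); [exact: h1|exact: h2].
Qed.

Lemma good_norm G : good G -> good (fun y => `|G y|).
Proof.
move=> [mG [B hB]]; split.
  exact: (measurableT_comp (@measurable_realfun.normr_measurable R setT) mG).
by exists B => y Sy; rewrite normr_id; apply: hB.
Qed.

Lemma good_cst c : good (fun=> c).
Proof. by split => //; exists `|c|. Qed.

Variables (K : R -> R) (x : 'rV[R]_n).
Hypothesis Kmono : {homo K : a b / a <= b}.
Hypothesis Kbnd : exists M : R, forall t, `|K t| <= M.
Hypothesis Kmeas : measurable_fun setT K.

Lemma good_Kdot (w : 'rV[R]_n) : good (fun y : E => K (dotp w y)).
Proof.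
split.
  apply: (measurableT_comp Kmeas).
  exact: meas_cont (meas_sphere R n rho) (cont_dotp R n w).
by case: Kbnd => M hM; exists M => y _; apply: hM.
Qed.

Definition hh (y : E) := K (dotp x y) - K (dotp x (refl v y)).

Lemma key (g : E -> R) : good g ->
  2 * (Kop rho m K g x - Kop rho m K g (refl v x)) =
  Rintegral m S (fun y => hh y * (g y - g (refl v y))).
Proof.
move=> gg.
have mS := meas_sphere R n rho.
pose F1 y := K (dotp x y) * g y.
pose F2 y := K (dotp x (refl v y)) * g y.
have g1 : good F1 by apply: good_M => //; exact: good_Kdot.
have g2 : good F2.
  apply: (@good_M (fun y => K (dotp x (refl v y))) g) => //.
  exact: (good_ext _ _ (fun y _ => erefl) (good_comp _ (good_Kdot x))).
have e1 : Kop rho m K g x = Rintegral m S F1 by [].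
have e2 : Kop rho m K g (refl v x) = Rintegral m S F2.
  by apply: eq_Rintegral => y _; rewrite /F2 dotp_reflC.
have e3 : Rintegral m S (fun y => hh y * (g y - g (refl v y))) =
   Rintegral m S (fun y => (F1 y - F2 y) - ((F2 \o refl v) y - (F1 \o refl v) y)).
  apply: eq_Rintegral => y _; rewrite /hh /F1 /F2 /= reflK //; ring.
rewrite e1 e2 e3 RintegralB //; first last.
- by apply: good_integ; apply: good_B; apply: good_comp.
- by apply: good_integ; apply: good_B.
rewrite RintegralB //; try by apply: good_integ.
rewrite RintegralB //; try by apply: good_integ; apply: good_comp.
rewrite (CV _ (proj1 g1) (proj2 g1)) (CV _ (proj1 g2) (proj2 g2)).
ring.
Qed.

Lemma maxmin (p q : R) : Num.max p q - Num.min q p = `|p - q|.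
Proof. by have [h|h] := lerP p q; ring. Qed.

Lemma minmax (p q : R) : Num.min p q - Num.max q p = - `|p - q|.
Proof. by have [h|h] := lerP p q; ring. Qed.

Lemma pol_diff (f : E -> R) (y : E) :
  polarize v f y - polarize v f (refl v y) =
  (if 0 <= dotp y v then 1 else -1) * `|f y - f (refl v y)|.
Proof.
rewrite /polarize dotp_refl_v // reflK // oppr_ge0.
have [hy|hy|hy] := ltrgtP (dotp y v) 0.
- by rewrite minmax mulN1r.
- by rewrite maxmin mul1r.
- by rewrite refl0 // subrr subrr normr0 mulr0.
Qed.

Lemma hh_sign (y : E) :
  0 <= (if 0 <= dotp y v then 1 else -1) * (if 0 <= dotp x v then 1 else -1) * hh y.
Proof.
rewrite /hh -dotp_reflC dotp_refl_l (dotpC _ _ v y).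
set t := dotp x y; set a := dotp y v; set b := dotp x v.
case: ifP => ha; case: ifP => hb.
- have : K (t - 2 * b * a) <= K t by apply: Kmono; nra.
  lra.
- have : K t <= K (t - 2 * b * a).
    apply: Kmono; have : b < 0 by rewrite ltNge hb.
    nra.
  lra.
- have : K t <= K (t - 2 * b * a).
    apply: Kmono; have : a < 0 by rewrite ltNge ha.
    nra.
  lra.
- have : K (t - 2 * b * a) <= K t.
    apply: Kmono; have : a < 0 by rewrite ltNge ha.
    have : b < 0 by rewrite ltNge hb.
    nra.
  lra.
Qed.

Lemma pw (f : E -> R) (y : E) :
  hh y * (polarize v f y - polarize v f (refl v y)) =
  (if 0 <= dotp x v then 1 else -1) * `|hh y * (f y - f (refl v y))|.
Proof.
have := hh_sign y; rewrite pol_diff normrM.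
case: ifP => _; case: ifP => _ hs.
- by rewrite (@ger0_norm _ (hh y)); [ring|lra].
- by rewrite (@ler0_norm _ (hh y)); [ring|lra].
- by rewrite (@ler0_norm _ (hh y)); [ring|lra].
- by rewrite (@ger0_norm _ (hh y)); [ring|lra].
Qed.

Lemma final (f : E -> R) :
  m.-integrable S (EFin \o f) ->
  (forall y, S y -> 0 <= f y <= 1) ->
  `|Kop rho m K f x - Kop rho m K f (refl v x)|
      <= `|Kop rho m K (polarize v f) x - Kop rho m K (polarize v f) (refl v x)|.
Proof.
move=> fint f01.
have mS := meas_sphere R n rho.
have mf : measurable_fun S f.
  by case/integrableP: fint => mfE _; apply/measurable_realfun.measurable_EFinP.
have gf : good f.
  split => //; exists 1 => y Sy; have /andP[h0 h1] := f01 y Sy.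
  by rewrite ger0_norm.
have gfs : good (f \o refl v) by apply: good_comp.
have gp : good (polarize v f).
  split.
    rewrite /polarize.
    apply: measurable_fun_if => //.
    - apply: (measurable_fun_bool true).
      have := meas_cont R n _ _ mS (cont_dotpr R n v) mS _ (measurable_itv `[0, +oo[%R).
      congr measurable; apply/funext => y; apply/propext.
      rewrite /preimage /= in_itv /= andbT; exact: iff_refl.
    - apply: (measurable_funS mS _ (measurable_realfun.measurable_maxr (proj1 gf) (proj1 gfs))).
      by move=> y [].
    - apply: (measurable_funS mS _ (measurable_realfun.measurable_minr (proj1 gf) (proj1 gfs))).
      by move=> y [].
  exists 1 => y Sy.
  have /andP[a0 a1] := f01 y Sy.
  have /andP[b0 b1] := f01 _ (reflS y Sy).
  rewrite /polarize; case: ifP => _.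
    rewrite ger0_norm; first by rewrite ge_max a1 b1.
    by rewrite le_max a0.
  rewrite ger0_norm; first by rewrite ge_min a1.
  by rewrite le_min a0 b0.
have gh : good hh.
  apply: good_B; first exact: good_Kdot.
  exact: (good_ext _ _ (fun y _ => erefl) (good_comp _ (good_Kdot x))).
have gP : good (fun y => hh y * (f y - f (refl v y))).
  by apply: good_M => //; apply: good_B.
have k1 := key _ gf.
have k2 := key _ gp.
have e : Rintegral m S (fun y => hh y * (polarize v f y - polarize v f (refl v y))) =
  Rintegral m S (fun y => (if 0 <= dotp x v then 1 else -1) * `|hh y * (f y - f (refl v y))|).
  by apply: eq_Rintegral => y _; exact: pw.
rewrite e in k2.
rewrite RintegralZl // in k2; last by apply: good_integ; apply: good_norm.
have h1 := le_normr_Rintegral mS (good_integ _ gP).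
have h2 : 0 <= Rintegral m S (fun y => `|hh y * (f y - f (refl v y))|).
  by apply: Rintegral_ge0 => y _.
move: k1 k2 h1 h2.
set A := Kop rho m K f x - _; set B := Kop rho m K _ x - _.
set I := Rintegral m S _; set J := Rintegral m S _.
move=> k1 k2 h1 h2.
have ea : 2 * `|A| = `|I| by rewrite -k1 normrM ger0_norm.
have eb : 2 * `|B| = J.
  have := congr1 (fun z => `|z|) k2; rewrite /= !normrM (ger0_norm h2).
  rewrite (@ger0_norm _ 2) // => ->.
  by case: ifP => _; rewrite ?normrN normr1 mul1r.
lra.
Qed.
End Main.

Theorem lemma11 (R : realType) (n : nat) (rho : R)
    (m : {measure set (euclid R n) -> \bar R})
    (f : euclid R n -> R) (K : R -> R) (v : 'rV[R]_n) :
  (2 <= n)%N ->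
  0 < rho ->
  (* m is a uniform (finite, rotation-invariant) measure on S^{n-1}_rho *)
  m (~` @sphere R n rho) = 0%E ->
  (m setT < +oo)%E ->
  (forall Q : 'M[R]_n, is_orthogonal_mx Q ->
     forall A : set (euclid R n), measurable A ->
       m ((fun x : euclid R n => (mulmx (x : 'rV[R]_n) Q : euclid R n)) @^-1` A) = m A) ->
  (* f : S^{n-1}_rho -> [0,1] integrable *)
  m.-integrable (@sphere R n rho) (EFin \o f) ->
  (forall x, @sphere R n rho x -> 0 <= f x <= 1) ->
  (* K non-decreasing, bounded, measurable *)
  {homo K : a b / a <= b} ->
  (exists M : R, forall t, `|K t| <= M) ->
  measurable_fun setT K ->
  (* sigma = v^perp, v unit normal with <v, r> > 0 (so r \notin sigma) *)
  dotp v v = 1 ->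
  0 < dotp v (rpoint n rho) ->
  forall x : 'rV[R]_n, @sphere R n rho x ->
    `|Kop rho m K f x - Kop rho m K f (refl v x)|
      <= `|Kop rho m K (polarize v f) x - Kop rho m K (polarize v f) (refl v x)|.
Proof.
move=> _ _ _ mfin minv fint f01 Kmono Kbnd Kmeas vv _ x _.
by apply: final.
Qed.
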